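(* Let $p$ be a prime, $\mathcal{O}$ an order in $B_p$, and let $\beta_1,\beta_2$ be linearly independent elements of $\mathcal{O}^T$. Suppose $N(\beta_1)\le p$ and that $\beta_2$ has minimal norm among the elements of $\beta_2+\mathbb{Z}\beta_1$. Then $|\frac12\mathrm{Tr}(\beta_1\overline{\beta_2})|$ equals the least non-negative integer $t$ with $t^2\equiv N(\beta_1)N(\beta_2)\pmod p$.
   Context: $B_p$ is the quaternion algebra over $\mathbb{Q}$ ramified exactly at $p$ and $\infty$, with canonical involution $\overline{x}$, reduced norm $N(x)=x\overline{x}$ and reduced trace $\mathrm{Tr}(x)=x+\overline{x}$. The Gross lattice of an order $\mathcal{O}$ is $\mathcal{O}^T=\{2x-\mathrm{Tr}(x):x\in\mathcal{O}\}$. *)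

(* Defs.v *)
From HB Require Import structures.
From mathcomp Require Import all_boot all_order all_algebra.
Set Implicit Arguments. Unset Strict Implicit. Unset Printing Implicit Defensive.
Import Order.TTheory GRing.Theory Num.Theory.
Local Open Scope ring_scope.

(* Elements x0 + x1 i + x2 j + x3 k of the quaternion algebra (a,b)_Q,
   i^2 = a, j^2 = b, k = ij = -ji. *)
Record quat := Quat { q0 : rat; q1 : rat; q2 : rat; q3 : rat }.

Definition qzero := Quat 0 0 0 0.
Definition qone := Quat 1 0 0 0.
Definition qadd (x y : quat) :=
  Quat (q0 x + q0 y) (q1 x + q1 y) (q2 x + q2 y) (q3 x + q3 y).
Definition qscale (c : rat) (x : quat) :=
  Quat (c * q0 x) (c * q1 x) (c * q2 x) (c * q3 x).
Definition qsub (x y : quat) := qadd x (qscale (-1) y).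
Definition qrat (c : rat) := Quat c 0 0 0.
Definition qconj (x : quat) := Quat (q0 x) (- q1 x) (- q2 x) (- q3 x).

Definition qtrace (x : quat) : rat := q0 (qadd x (qconj x)).

Definition qlincomb (c : 'I_4 -> rat) (e : 'I_4 -> quat) : quat :=
  \big[qadd/qzero]_(i < 4) qscale (c i) (e i).

Definition gross_lattice (O : quat -> Prop) (beta : quat) : Prop :=
  exists x, O x /\ beta = qsub (qscale 2 x) (qrat (qtrace x)).

Section Alg.
Variables (a b : int).
Let A : rat := a%:~R.
Let B : rat := b%:~R.

Definition qmul (x y : quat) :=
  Quat (q0 x * q0 y + A * q1 x * q1 y + B * q2 x * q2 y - A * B * q3 x * q3 y)
       (q0 x * q1 y + q1 x * q0 y - B * q2 x * q3 y + B * q3 x * q2 y)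
       (q0 x * q2 y + q2 x * q0 y + A * q1 x * q3 y - A * q3 x * q1 y)
       (q0 x * q3 y + q3 x * q0 y + q1 x * q2 y - q2 x * q1 y).

Definition qnorm (x : quat) : rat := q0 (qmul x (qconj x)).

Definition is_order (O : quat -> Prop) : Prop :=
  (exists e : 'I_4 -> quat,
      (forall c : 'I_4 -> rat, qlincomb c e = qzero -> forall i, c i = 0) /\
      (forall x, O x <-> exists z : 'I_4 -> int,
                    x = qlincomb (fun i => (z i)%:~R) e)) /\
  O qone /\ (forall x y, O x -> O y -> O (qmul x y)).

End Alg.

Definition qlin_indep2 (x y : quat) : Prop :=
  forall c d : rat, qadd (qscale c x) (qscale d y) = qzero -> c = 0 /\ d = 0.

(* Ramification of (a,b)_Q at a finite prime l: the norm form
   x0^2 - a x1^2 - b x2^2 + ab x3^2 is anisotropic over Q_l, i.e.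
   (by compactness of primitive vectors in Z_l^4) for some k there is no
   primitive integer vector on which the form vanishes mod l^k. *)
Definition normform_int (a b x0 x1 x2 x3 : int) : int :=
  x0 ^+ 2 - a * x1 ^+ 2 - b * x2 ^+ 2 + a * b * x3 ^+ 2.

Definition ramified_at (a b : int) (l : nat) : Prop :=
  exists k : nat, forall x0 x1 x2 x3 : int,
    ~~ [&& (l%:Z %| x0)%Z, (l%:Z %| x1)%Z, (l%:Z %| x2)%Z & (l%:Z %| x3)%Z] ->
    ~~ ((l ^ k)%N%:Z %| normform_int a b x0 x1 x2 x3)%Z.

(* (a,b)_Q is ramified at infinity (definite: a < 0 and b < 0) and at
   exactly the finite prime p: it is a model of B_p. *)
Definition is_Bp_model (p : nat) (a b : int) : Prop :=
  a < 0 /\ b < 0 /\ (forall l : nat, prime l -> (ramified_at a b l <-> l = p)).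

Definition sq_cong_mod (p s : nat) (r : rat) : Prop :=
  exists k : int, (s ^ 2)%N%:R - r = p%:R * k%:~R.

(* Main.v *)
Require Import Defs.
From HB Require Import structures.
From mathcomp Require Import all_boot all_order all_algebra.
From mathcomp Require Import zify ring lra.
Set Implicit Arguments. Unset Strict Implicit. Unset Printing Implicit Defensive.
Import Order.TTheory GRing.Theory Num.Theory.
Local Open Scope ring_scope.

Lemma Fp_lift (p : nat) (x : 'F_p) : exists k : nat, x = k%:R.
Proof. exists (val x). by rewrite natr_Zp. Qed.

Lemma Fp_nat0 (p : nat) (n : nat) : prime p -> (n%:R : 'F_p) = 0 -> (p %| n)%N.
Proof.
move=> pp h. have := val_Fp_nat pp n. rewrite h /= => e.
by rewrite /dvdn -e.
Qed.

Lemma Fp_int0 (p : nat) (z : int) : prime p -> (z%:~R : 'F_p) = 0 -> (p%:Z %| z)%Z.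
Proof.
move=> pp; case: z => n /=.
  by move=> h; rewrite /dvdz /=; apply: Fp_nat0 h.
rewrite NegzE mulrNz => /eqP; rewrite oppr_eq0 => /eqP h.
rewrite /dvdz /=; exact: Fp_nat0 h.
Qed.

Lemma Fp_2 (p : nat) : prime p -> odd p -> (2%:R : 'F_p) != 0.
Proof.
move=> pp op; apply/eqP => /(Fp_nat0 pp). rewrite dvdn_prime2 //.
by move=> /eqP e; rewrite e in op.
Qed.

Lemma Fp_small_inj (p : nat) (u v : nat) : prime p -> odd p ->
  (u < p.+1./2)%N -> (v < p.+1./2)%N ->
  ((u%:R : 'F_p) ^+ 2 = v%:R ^+ 2) -> u = v.
Proof.
move=> pp op hu hv.
have h2 := odd_double_half p.+1. rewrite /= op /= in h2.
have p0 := prime_gt0 pp.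
have lt : (u + v < p)%N by rewrite -mul2n in h2; lia.
move=> /eqP; rewrite -subr_eq0 subr_sqr mulf_eq0 => /orP [].
  rewrite subr_eq0 => /eqP e.
  have := val_Fp_nat pp u; have := val_Fp_nat pp v. rewrite e => ->.
  rewrite !modn_small //; lia.
rewrite -natrD => /eqP /(Fp_nat0 pp) d.
move: d lt; case E: (u + v)%N => [|k]. lia.
move=> d lt; have := dvdn_leq _ d. move=> /(_ isT). lia.
Qed.

Lemma Fp_pigeon (p : nat) (be ga : 'F_p) : prime p -> odd p -> be != 0 ->
  exists u y : 'F_p, u ^+ 2 + be * y ^+ 2 + ga = 0.
Proof.
move=> pp op b0.
pose h := p.+1./2.
pose f1 := fun u : 'I_h => ((u : nat)%:R : 'F_p) ^+ 2.
pose f2 := fun u : 'I_h => - ga - be * ((u : nat)%:R : 'F_p) ^+ 2.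
have i1 : injective f1.
  move=> u v e; apply: val_inj; exact: (Fp_small_inj pp op (ltn_ord u) (ltn_ord v) e).
have i2 : injective f2.
  move=> u v; rewrite /f2 => /eqP; rewrite (inj_eq (addrI _)) eqr_opp.
  rewrite (inj_eq (mulfI b0)) => /eqP e.
  apply: val_inj; exact: (Fp_small_inj pp op (ltn_ord u) (ltn_ord v) e).
set A := [set f1 x | x in [pred x | true]].
set B := [set f2 x | x in [pred x | true]].
have c1 : #|A| = h by rewrite card_imset // card_ord.
have c2 : #|B| = h by rewrite card_imset // card_ord.
have cU := cardsUI A B.
have cm : (#|A :|: B| <= p)%N by have := max_card (A :|: B); rewrite card_Fp.
have h2 : (2 * h)%N = p.+1.
  by move: (odd_double_half p.+1); rewrite -mul2n oddS op.
have : (A :&: B) != set0.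
  rewrite -card_gt0. rewrite c1 c2 in cU. clearbody h.
  move: cU cm h2; move: (#|A :|: B|) (#|A :&: B|) => x y. lia.
case/set0Pn => z; rewrite inE => /andP [/imsetP [u _ ->] /imsetP [y _ e]].
exists (u%:R), (y%:R). move: e; rewrite /f1 /f2 => ->. ring.
Qed.

Lemma Fp_rep1 (p : nat) (n s m : 'F_p) : prime p -> odd p ->
  n * m - s ^+ 2 != 0 -> n != 0 ->
  exists x y : 'F_p, n * x ^+ 2 + 2%:R * s * x * y + m * y ^+ 2 + 1 = 0.
Proof.
move=> pp op D0 n0.
have [u [y e]] := Fp_pigeon n pp op D0.
exists ((u - s * y) / n), y.
apply: (mulfI n0). rewrite mulr0.
have -> : n * (n * ((u - s * y) / n) ^+ 2 + 2%:R * s * ((u - s * y) / n) * y + m * y ^+ 2 + 1)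
  = u ^+ 2 + (n * m - s ^+ 2) * y ^+ 2 + n.
  field. exact: n0.
by [].
Qed.

Lemma Fp_rep (p : nat) (n s m : 'F_p) : prime p -> odd p ->
  n * m - s ^+ 2 != 0 ->
  exists x y : 'F_p, n * x ^+ 2 + 2%:R * s * x * y + m * y ^+ 2 + 1 = 0.
Proof.
move=> pp op D0.
have [n0|n0] := eqVneq n 0; last exact: Fp_rep1.
have [m0|m0] := eqVneq m 0; last first.
  have D0' : m * n - s ^+ 2 != 0 by rewrite mulrC.
  have [x [y e]] := Fp_rep1 pp op D0' m0.
  exists y, x. rewrite -e. ring.
have s0 : s != 0.
  apply: contra D0 => /eqP ->; rewrite n0; apply/eqP; ring.
have t0 : 2%:R * s != 0 by rewrite mulf_neq0 // Fp_2.
exists 1, (- (2%:R * s)^-1).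
rewrite n0 m0. field. by rewrite s0 Fp_2.
Qed.

Lemma int_Fp (p : nat) (z : int) : (z%:~R : 'F_p) = 0 -> prime p -> (p%:Z %| z)%Z.
Proof. by move=> h pp; apply: Fp_int0. Qed.

Lemma stepA (p : nat) (n s m : int) : prime p -> odd p ->
  ~~ (p%:Z %| n * m - s ^+ 2)%Z ->
  exists x y : int, (p%:Z %| n * x ^+ 2 + 2 * s * x * y + m * y ^+ 2 + 1)%Z.
Proof.
move=> pp op nD.
have D0 : ((n%:~R : 'F_p) * m%:~R - (s%:~R) ^+ 2) != 0.
  apply: contra nD => /eqP h. apply: (Fp_int0 pp).
  by rewrite intrD intrM intrN rmorphXn /=.
have [x [y e]] := Fp_rep pp op D0.
have [k ek] := Fp_lift x; have [l el] := Fp_lift y; rewrite ek el in e.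
exists k%:Z, l%:Z. apply: (Fp_int0 pp).
rewrite -e !(intrD, intrM, rmorphXn) /=. 
have hk : ((k%:Z)%:~R : 'F_p) = k%:R by [].
have hl : ((l%:Z)%:~R : 'F_p) = l%:R by [].
have h1 : ((1 : int)%:~R : 'F_p) = 1 by [].
rewrite hk hl h1. ring.
Qed.

Lemma hensel (p : nat) (c : int) : prime p -> odd p -> (p%:Z %| c - 1)%Z ->
  forall K : nat, exists X : int, (p%:Z %| X - 1)%Z /\ ((p ^ K.+1)%N%:Z %| X ^+ 2 - c)%Z.
Proof.
move=> pp op hc; elim=> [|K [X [hX hK]]].
  exists 1; split; first by rewrite subrr dvdz0.
  rewrite expn1 expr1n. by rewrite -opprB rpredN.
have cop : coprimez (2 * X) p%:Z.
  rewrite coprimezE coprime_sym prime_coprime // abszM.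
  rewrite Euclid_dvdM // negb_or; apply/andP; split.
    apply/negP => /(@dvdn_leq _ 2 isT) h. have p1 := prime_gt1 pp.
    have : p = 2%N by lia. by move=> e; rewrite e in op.
  apply/negP => h.
  have : (p%:Z %| X)%Z by rewrite dvdzE.
  move=> hX'. have : (p%:Z %| X - (X - 1))%Z by rewrite rpredB.
  rewrite opprB addrC subrK dvdz1 /= => /eqP e.
  by move: (prime_gt1 pp); rewrite e.
have [[u v] /= euv] := coprimezP _ _ cop.
have [r er] := dvdzP hK. have [w ew] := dvdzP hX.
exists (X - r * u * (p ^ K.+1)%N%:Z); split.
  apply/dvdzP; exists (w - r * u * (p ^ K)%N%:Z).
  have eX1 : X = w * p%:Z + 1 by rewrite -ew; ring.
  rewrite expnS PoszM eX1. ring.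
apply/dvdzP; exists (r * v + r ^+ 2 * u ^+ 2 * (p ^ K)%N%:Z).
move: er euv; rewrite !expnS !PoszM; set q := p%:Z; set P := (p ^ K)%N%:Z.
move=> er euv.
apply/eqP; rewrite -subr_eq0.
have -> : (X - r * u * (q * P)) ^+ 2 - c - (r * v + r ^+ 2 * u ^+ 2 * P) * (q * (q * P))
  = (X ^+ 2 - c - r * (q * P)) - r * q * P * (u * (2 * X) + v * q - 1) by ring.
by rewrite er euv !subrr mulr0 subrr.
Qed.

Lemma val_strip (p k G Mn Xn Nn : nat) : prime p -> (0 < G)%N -> (0 < Mn)%N ->
  (G %| Mn * Xn)%N -> ~~ (p %| Xn)%N -> (p ^ (k + 2 * Mn) %| G ^ 2 * Nn)%N ->
  (p ^ k %| Nn)%N.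
Proof.
move=> pp G0 M0 dG nX dK.
have X0 : (0 < Xn)%N by case: Xn nX dG => //; rewrite dvdn0.
case: (posnP Nn) => [->|N0]; first by rewrite dvdn0.
rewrite pfactor_dvdn //.
rewrite pfactor_dvdn // ?muln_gt0 ?expn_gt0 ?G0 ?N0 // in dK.
rewrite lognM ?expn_gt0 ?G0 // in dK.
have lG : (logn p G <= logn p (Mn * Xn))%N by apply: dvdn_leq_log => //; rewrite muln_gt0 M0.
rewrite lognM // (logn_coprime (p := p) (m := Xn)) ?addn0 in lG; last by rewrite prime_coprime.
have lM : (logn p Mn < Mn)%N.
  have := pfactor_dvdnn p Mn => /(dvdn_leq M0) h.
  have := ltn_expl (logn p Mn) (prime_gt1 pp). lia.
have e2 : logn p (G ^ 2) = (2 * logn p G)%N.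
  by rewrite expnS expn1 lognM // mul2n addnn.
rewrite e2 in dK. lia.
Qed.

Definition vec (x : quat) : 'rV[rat]_4 :=
  \row_(j < 4) [:: q0 x; q1 x; q2 x; q3 x]`_j.

Lemma vec_inj : injective vec.
Proof.
move=> [x0 x1 x2 x3] [y0 y1 y2 y3] /rowP h.
have h0 := h 0. have h1 := h 1. have h2 := h 2%:R. have h3 := h 3%:R.
rewrite !mxE /= in h0 h1 h2 h3. by rewrite h0 h1 h2 h3.
Qed.

Lemma vec_add x y : vec (qadd x y) = vec x + vec y.
Proof. by apply/rowP => j; rewrite !mxE; case: j => [[|[|[|[|?]]]] ?]. Qed.

Lemma vec_zero : vec qzero = 0.
Proof. by apply/rowP => j; rewrite !mxE; case: j => [[|[|[|[|?]]]] ?]. Qed.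

Lemma vec_scale c x : vec (qscale c x) = c *: vec x.
Proof. by apply/rowP => j; rewrite !mxE; case: j => [[|[|[|[|?]]]] ?]. Qed.

Definition Emat (e : 'I_4 -> quat) : 'M[rat]_4 := \matrix_(i, j) vec (e i) 0 j.

Lemma vec_lincomb c e : vec (qlincomb c e) = (\row_i c i) *m Emat e.
Proof.
rewrite /qlincomb (big_morph vec vec_add vec_zero).
apply/rowP => j; rewrite summxE !mxE; apply: eq_bigr => i _.
by rewrite vec_scale !mxE.
Qed.

Lemma row_Emat e i : row i (Emat e) = vec (e i).
Proof. by apply/rowP => j; rewrite !mxE. Qed.

Lemma Emat_unit (e : 'I_4 -> quat) :
  (forall c : 'I_4 -> rat, qlincomb c e = qzero -> forall i, c i = 0) ->
  Emat e \in unitmx.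
Proof.
move=> ind; rewrite unitmxE unitfE; apply/negP => /det0P [v v0 ev].
move/eqP: v0; apply; apply/rowP => i; rewrite mxE.
have h : qlincomb (fun j => v 0 j) e = qzero.
  apply: vec_inj; rewrite vec_lincomb vec_zero -ev; congr (_ *m _).
  by apply/rowP => j; rewrite !mxE.
exact: ind h i.
Qed.

Lemma trace_int (O : quat -> Prop) (e : 'I_4 -> quat) (f : quat -> quat) (F : 'M[rat]_4) :
  (forall c : 'I_4 -> rat, qlincomb c e = qzero -> forall i, c i = 0) ->
  (forall x, O x <-> exists z : 'I_4 -> int, x = qlincomb (fun i => (z i)%:~R) e) ->
  (forall v, vec (f v) = vec v *m F) -> (forall v, O v -> O (f v)) ->
  exists z : int, \tr F = z%:~R.
Proof.
move=> ind span hF hO.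
have Oe : forall i, O (e i).
  move=> i; apply/span; exists (fun j => (j == i)%:Z).
  apply: vec_inj; rewrite vec_lincomb -row_Emat rowE; congr (_ *m _).
  apply/rowP => j; rewrite !mxE eq_sym; by case: (i == j).
have : forall i, exists z : 'I_4 -> int, f (e i) = qlincomb (fun j => (z j)%:~R) e.
  by move=> i; apply/span; apply: hO.
case/fin_all_exists => Z hZ.
pose Zm : 'M[int]_4 := \matrix_(i, j) Z i j.
have EF : Emat e *m F = map_mx intr Zm *m Emat e.
  apply/row_matrixP => i; rewrite !row_mul row_Emat -hF hZ vec_lincomb.
  congr (_ *m _); apply/rowP => j; by rewrite !mxE.
have U := Emat_unit ind.
have -> : F = invmx (Emat e) *m (map_mx intr Zm *m Emat e).
  by rewrite -EF mulKmx.
rewrite mxtrace_mulC -mulmxA mulmxV // mulmx1.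
exists (\tr Zm). by rewrite (trace_map_mx (intr : int -> rat)).
Qed.

Definition stdq (i : 'I_4) : quat :=
  Quat (i == 0 :> nat)%:R (i == 1 :> nat)%:R (i == 2 :> nat)%:R (i == 3 :> nat)%:R.
Definition Fmat (f : quat -> quat) : 'M[rat]_4 := \matrix_(i, j) vec (f (stdq i)) 0 j.

Lemma Fmat_L (a b : int) (x : quat) v : vec (qmul a b x v) = vec v *m Fmat (qmul a b x).
Proof.
case: x v => [x0 x1 x2 x3] [v0 v1 v2 v3].
apply/rowP => j; rewrite !mxE !big_ord_recr big_ord0 /= !mxE /=.
case: j => [[|[|[|[|?]]]] ?] //=; ring.
Qed.

Lemma Fmat_LR (a b : int) (x : quat) v :
  vec (qmul a b (qmul a b x v) x) = vec v *m Fmat (fun w => qmul a b (qmul a b x w) x).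
Proof.
case: x v => [x0 x1 x2 x3] [v0 v1 v2 v3].
apply/rowP => j; rewrite !mxE !big_ord_recr big_ord0 /= !mxE /=.
case: j => [[|[|[|[|?]]]] ?] //=; ring.
Qed.

Lemma tr_L (a b : int) (x : quat) : \tr (Fmat (qmul a b x)) = 2 * qtrace x.
Proof.
case: x => [x0 x1 x2 x3].
rewrite /mxtrace !big_ord_recr big_ord0 /= !mxE /= /qtrace /=. ring.
Qed.

Lemma tr_LR (a b : int) (x : quat) :
  \tr (Fmat (fun w => qmul a b (qmul a b x w) x)) = qtrace x ^+ 2.
Proof.
case: x => [x0 x1 x2 x3].
rewrite /mxtrace !big_ord_recr big_ord0 /= !mxE /= /qtrace /=. ring.
Qed.

Lemma even_sq (z k : int) : z ^+ 2 = 2 * k -> exists w : int, z = w * 2.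
Proof.
move=> e. apply/dvdzP. have : (2 %| z ^+ 2)%Z by rewrite e dvdz_mulr.
rewrite !dvdzE abszX /= expnS expn1 Euclid_dvdM //. by rewrite orbb.
Qed.

Lemma half_int (t : rat) (z1 k : int) : 2 * t = z1%:~R -> z1 ^+ 2 = 2 * k ->
  exists w : int, t = w%:~R.
Proof.
move=> e1 e2; have [w ew] := even_sq e2; exists w.
apply: (mulfI (_ : (2 : rat) != 0)) => //. rewrite e1 ew intrM. 
rewrite mulrC. done.
Qed.


Lemma span_add (e : 'I_4 -> quat) (z w : 'I_4 -> int) :
  qadd (qlincomb (fun i => (z i)%:~R) e) (qlincomb (fun i => (w i)%:~R) e)
  = qlincomb (fun i => ((z i + w i)%R)%:~R) e.
Proof.
apply: vec_inj; rewrite vec_add !vec_lincomb -mulmxDl; congr (_ *m _).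
by apply/rowP => j; rewrite !mxE intrD.
Qed.

Lemma span_scale (e : 'I_4 -> quat) (z : 'I_4 -> int) (n : int) :
  qscale n%:~R (qlincomb (fun i => (z i)%:~R) e)
  = qlincomb (fun i => ((n * z i)%R)%:~R) e.
Proof.
apply: vec_inj; rewrite vec_scale !vec_lincomb scalemxAl; congr (_ *m _).
by apply/rowP => j; rewrite !mxE intrM.
Qed.

Lemma O_add a b O x y : is_order a b O -> O x -> O y -> O (qadd x y).
Proof.
move=> [[e [ind span]] _] /span [z ->] /span [w ->].
apply/span; exists (fun i => z i + w i); exact: span_add.
Qed.

Lemma O_scale a b O (n : int) x : is_order a b O -> O x -> O (qscale n%:~R x).
Proof.
move=> [[e [ind span]] _] /span [z ->].
apply/span; exists (fun i => n * z i); exact: span_scale.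
Qed.

Lemma O_mul a b O x y : is_order a b O -> O x -> O y -> O (qmul a b x y).
Proof. by move=> [_ [_ h]]; apply: h. Qed.

Lemma O_rat a b O (n : int) : is_order a b O -> O (qrat n%:~R).
Proof.
move=> hO; have [_ [h1 _]] := hO.
have -> : qrat n%:~R = qscale n%:~R qone by rewrite /qrat /qscale /qone /= mulr1 !mulr0.
exact: (O_scale n hO h1).
Qed.

Lemma order_trace a b O x : is_order a b O -> O x -> exists z : int, qtrace x = z%:~R.
Proof.
move=> hO Ox; have [[e [ind span]] _] := hO.
have [z1 e1] := trace_int ind span (Fmat_L a b x) (fun v Ov => O_mul hO Ox Ov).
have [z2 e2] := trace_int ind span (Fmat_LR a b x)
   (fun v Ov => O_mul hO (O_mul hO Ox Ov) Ox).
rewrite tr_L in e1; rewrite tr_LR in e2.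
apply: (half_int e1 (k := 2 * z2)).
apply: (@intr_inj rat); rewrite rmorphXn /= -e1 !intrM -e2 /=. ring.
Qed.

Lemma rat_in_O a b O (r : rat) : is_order a b O -> O (qrat r) -> exists z : int, r = z%:~R.
Proof.
move=> hO Or.
have [z1 e1] := order_trace hO Or.
have [z2 e2] := order_trace hO (O_mul hO Or Or).
rewrite /qtrace /= in e1 e2.
apply: (half_int (_ : 2 * r = z1%:~R) (k := z2)).
  by rewrite -e1; ring.
apply: (@intr_inj rat); rewrite rmorphXn /= -e1 !intrM -e2 /=. ring.
Qed.

Lemma conj_in_O a b O x : is_order a b O -> O x -> O (qconj x).
Proof.
move=> hO Ox; have [t et] := order_trace hO Ox.
have -> : qconj x = qadd (qrat t%:~R) (qscale (-1)%:~R x).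
  rewrite -et; case: x {Ox et} => x0 x1 x2 x3; rewrite /qconj /qadd /qrat /qscale /qtrace /=.
  congr Quat; ring.
apply: (O_add hO); [exact: (O_rat t hO) | exact: (O_scale (-1) hO Ox)].
Qed.

Lemma order_norm a b O x : is_order a b O -> O x -> exists z : int, qnorm a b x = z%:~R.
Proof.
move=> hO Ox; apply: (rat_in_O hO).
have -> : qrat (qnorm a b x) = qmul a b x (qconj x).
  case: x {Ox} => x0 x1 x2 x3; rewrite /qrat /qnorm /qmul /qconj /=.
  congr Quat; ring.
apply: (O_mul hO Ox); exact: (conj_in_O hO Ox).
Qed.

Lemma prim_vec (p k : nat) (a b M X c1 c2 c3 W : int) : prime p -> M != 0 ->
  ~~ (p%:Z %| X)%Z ->
  normform_int a b (M * X) c1 c2 c3 = (p ^ (k + 2 * `|M|))%N%:Z * W ->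
  exists d0 d1 d2 d3 : int,
    ~~ [&& (p%:Z %| d0)%Z, (p%:Z %| d1)%Z, (p%:Z %| d2)%Z & (p%:Z %| d3)%Z] /\
    ((p ^ k)%N%:Z %| normform_int a b d0 d1 d2 d3)%Z.
Proof.
move=> pp M0 nX enf.
set c0 := M * X.
pose g := gcdz (gcdz c0 c1) (gcdz c2 c3).
have g0 : (g %| c0)%Z by rewrite /g; apply: (dvdz_trans (dvdz_gcdl _ _)); apply: dvdz_gcdl.
have g1 : (g %| c1)%Z by rewrite /g; apply: (dvdz_trans (dvdz_gcdl _ _)); apply: dvdz_gcdr.
have g2 : (g %| c2)%Z by rewrite /g; apply: (dvdz_trans (dvdz_gcdr _ _)); apply: dvdz_gcdl.
have g3 : (g %| c3)%Z by rewrite /g; apply: (dvdz_trans (dvdz_gcdr _ _)); apply: dvdz_gcdr.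
have X0 : X != 0 by apply: contra nX => /eqP ->; rewrite dvdz0.
have c00 : c0 != 0 by rewrite mulf_neq0.
have gn0 : g != 0 by apply: contra c00 => /eqP e; move: g0; rewrite e dvd0z.
exists (c0 %/ g)%Z, (c1 %/ g)%Z, (c2 %/ g)%Z, (c3 %/ g)%Z; split.
  apply/negP => /and4P [h0 h1 h2 h3].
  have dg : forall d, (d %| c0)%Z -> (d %| c1)%Z -> (d %| c2)%Z -> (d %| c3)%Z -> (d %| g)%Z.
    by move=> d d0 d1 d2 d3; rewrite /g !dvdz_gcd d0 d1 d2 d3.
  have : (p%:Z * g %| g)%Z.
    apply: dg.
    - by rewrite -(divzK g0) dvdz_mul2r.
    - by rewrite -(divzK g1) dvdz_mul2r.
    - by rewrite -(divzK g2) dvdz_mul2r.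
    - by rewrite -(divzK g3) dvdz_mul2r.
  have gp : (0 < `|g|)%N by rewrite absz_gt0.
  rewrite dvdzE abszM => /(dvdn_leq gp) h.
  by move: (leq_ltn_trans h (ltn_Pmull (prime_gt1 pp) gp)); rewrite ltnn.
have enf2 : normform_int a b c0 c1 c2 c3 = g ^+ 2 * normform_int a b (c0 %/ g)%Z (c1 %/ g)%Z (c2 %/ g)%Z (c3 %/ g)%Z.
  rewrite -{1}(divzK g0) -{1}(divzK g1) -{1}(divzK g2) -{1}(divzK g3) /normform_int. ring.
have hd : ((p ^ (k + 2 * `|M|))%N %| `|g| ^ 2 * `|normform_int a b (c0 %/ g)%Z (c1 %/ g)%Z (c2 %/ g)%Z (c3 %/ g)%Z|)%N.
  have : ((p ^ (k + 2 * `|M|))%N%:Z %| normform_int a b c0 c1 c2 c3)%Z by rewrite enf dvdz_mulr.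
  by rewrite enf2 dvdzE abszM abszX.
rewrite dvdzE /=.
apply: (val_strip (G := `|g|) (Mn := `|M|) (Xn := `|X|%N)) => //.
- by rewrite absz_gt0.
- by rewrite absz_gt0.
- by move: g0; rewrite dvdzE /c0 abszM.
Qed.

Lemma den_mul (M : int) (r : rat) : (denq r %| M)%Z -> exists z : int, z%:~R = M%:~R * r.
Proof.
move=> d; exists (numq r * (M %/ denq r)%Z).
rewrite intrM numqE -{2}(divzK d) intrM; ring.
Qed.

Lemma nf_cast (a b c0 c1 c2 c3 : int) :
  (normform_int a b c0 c1 c2 c3)%:~R = qnorm a b (Quat c0%:~R c1%:~R c2%:~R c3%:~R).
Proof.
rewrite /normform_int /qnorm /qmul /qconj /= !(intrD, intrM, intrN, rmorphXn) /=; ring.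
Qed.

Lemma qnorm_scale (a b : int) (M : rat) (e : quat) :
  qnorm a b (qscale M e) = M ^+ 2 * qnorm a b e.
Proof. case: e => *; rewrite /qnorm /qmul /qconj /qscale /=; ring. Qed.

Lemma odd_contra (p : nat) (a b : int) (be1 be2 : quat) : prime p -> ramified_at a b p ->
  q0 be1 = 0 -> q0 be2 = 0 ->
  (forall K : nat, exists X x y W : int, ~~ (p%:Z %| X)%Z /\
     qnorm a b (qadd (qrat X%:~R) (qadd (qscale x%:~R be1) (qscale y%:~R be2)))
       = ((p ^ K)%N%:Z * W)%:~R) -> False.
Proof.
move=> pp [k ram] h01 h02 hK.
pose M : int := denq (q1 be1) * denq (q2 be1) * denq (q3 be1) *
                denq (q1 be2) * denq (q2 be2) * denq (q3 be2).
have M0 : M != 0 by rewrite /M !mulf_neq0 // gt_eqF // denq_gt0.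
have [z11 e11] : exists z : int, z%:~R = M%:~R * q1 be1.
  by apply: den_mul; rewrite /M -!mulrA dvdz_mulr.
have [z12 e12] : exists z : int, z%:~R = M%:~R * q2 be1.
  by apply: den_mul; rewrite /M -!mulrA dvdz_mull // dvdz_mulr.
have [z13 e13] : exists z : int, z%:~R = M%:~R * q3 be1.
  by apply: den_mul; rewrite /M -!mulrA dvdz_mull // dvdz_mull // dvdz_mulr.
have [z21 e21] : exists z : int, z%:~R = M%:~R * q1 be2.
  by apply: den_mul; rewrite /M -!mulrA dvdz_mull // dvdz_mull // dvdz_mull // dvdz_mulr.
have [z22 e22] : exists z : int, z%:~R = M%:~R * q2 be2.
  by apply: den_mul; rewrite /M -!mulrA dvdz_mull // dvdz_mull // dvdz_mull // dvdz_mull // dvdz_mulr.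
have [z23 e23] : exists z : int, z%:~R = M%:~R * q3 be2.
  by apply: den_mul; rewrite /M -!mulrA dvdz_mull // dvdz_mull // dvdz_mull // dvdz_mull // dvdz_mull.
clearbody M.
have [X [x [y [W [nX eN]]]]] := hK (k + 2 * `|M|)%N.
set e := qadd _ _ in eN.
have ee : Quat (M * X)%:~R (x * z11 + y * z21)%:~R (x * z12 + y * z22)%:~R (x * z13 + y * z23)%:~R
   = qscale M%:~R e.
  rewrite /e /qscale /qadd /qrat /qscale /= h01 h02 !(intrD, intrM) e11 e12 e13 e21 e22 e23.
  congr Quat; ring.
have enf : normform_int a b (M * X) (x * z11 + y * z21) (x * z12 + y * z22) (x * z13 + y * z23)
   = (p ^ (k + 2 * `|M|))%N%:Z * (M ^+ 2 * W).
  apply: (@intr_inj rat).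
  rewrite nf_cast ee qnorm_scale eN !intrM rmorphXn /=; ring.
have [d0 [d1 [d2 [d3 [prim dv]]]]] := prim_vec pp M0 nX enf.
by move: (ram d0 d1 d2 d3 prim); rewrite dv.
Qed.

Definition gross (x : quat) := qsub (qscale 2 x) (qrat (qtrace x)).

Lemma gross_q0 x : q0 (gross x) = 0.
Proof. case: x => *; rewrite /gross /qsub /qadd /qscale /qrat /qtrace /qconj /=; ring. Qed.

Lemma gross_norm a b x : qnorm a b (gross x) = 4 * qnorm a b x - qtrace x ^+ 2.
Proof. case: x => *; rewrite /gross /qnorm /qmul /qsub /qadd /qscale /qrat /qtrace /qconj /=; ring. Qed.

Lemma gross_tr a b x y :
  qtrace (qmul a b (gross x) (qconj (gross y))) / 2 = qtrace x * qtrace y - 2 * qtrace (qmul a b x y).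
Proof.
apply: (mulIf (_ : (2 : rat) != 0)) => //; rewrite mulfVK //.
case: x => *; case: y => *.
rewrite /gross /qnorm /qmul /qsub /qadd /qscale /qrat /qtrace /qconj /=; ring.
Qed.

Lemma pure_norm a b (u v : quat) (X x y : rat) : q0 u = 0 -> q0 v = 0 ->
  qnorm a b (qadd (qrat X) (qadd (qscale x u) (qscale y v)))
  = X ^+ 2 + x ^+ 2 * qnorm a b u + x * y * qtrace (qmul a b u (qconj v)) + y ^+ 2 * qnorm a b v.
Proof.
move=> hu hv; case: u hu => u0 u1 u2 u3 /= ->; case: v hv => v0 v1 v2 v3 /= ->.
rewrite /qnorm /qmul /qsub /qadd /qscale /qrat /qtrace /qconj /=; ring.
Qed.

Lemma shift_norm a b (u v : quat) (c : rat) :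
  qnorm a b (qadd v (qscale c u))
  = qnorm a b v + c * qtrace (qmul a b u (qconj v)) + c ^+ 2 * qnorm a b u.
Proof.
case: u => *; case: v => *.
rewrite /qnorm /qmul /qsub /qadd /qscale /qrat /qtrace /qconj /=; ring.
Qed.

Lemma D_div (p : nat) (a b : int) O x y : prime p -> is_Bp_model p a b -> is_order a b O ->
  O x -> O y ->
  exists n m s : int, qnorm a b (gross x) = n%:~R /\ qnorm a b (gross y) = m%:~R /\
    qtrace (qmul a b (gross x) (qconj (gross y))) / 2 = s%:~R /\
    (p%:Z %| n * m - s ^+ 2)%Z.
Proof.
move=> pp [_ [_ hram]] hO Ox Oy.
have [Tx eTx] := order_trace hO Ox.
have [Ty eTy] := order_trace hO Oy.
have [Txy eTxy] := order_trace hO (O_mul hO Ox Oy).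
have [Nx eNx] := order_norm hO Ox.
have [Ny eNy] := order_norm hO Oy.
set n := 4 * Nx - Tx ^+ 2. set m := 4 * Ny - Ty ^+ 2. set s := Tx * Ty - 2 * Txy.
have en : qnorm a b (gross x) = n%:~R.
  by rewrite gross_norm eNx eTx /n intrD intrN intrM rmorphXn.
have em : qnorm a b (gross y) = m%:~R.
  by rewrite gross_norm eNy eTy /m intrD intrN intrM rmorphXn.
have es : qtrace (qmul a b (gross x) (qconj (gross y))) / 2 = s%:~R.
  by rewrite gross_tr eTx eTy eTxy /s intrD intrN !intrM.
exists n, m, s; split => //; split => //; split => //.
have [->|op] := even_prime pp.
  apply/dvdzP; exists (8 * Nx * Ny - 2 * Nx * Ty ^+ 2 - 2 * Ny * Tx ^+ 2 + 2 * Tx * Ty * Txy - 2 * Txy ^+ 2).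
  rewrite /n /m /s; ring.
case: (boolP (p%:Z %| n * m - s ^+ 2)%Z) => // nD; exfalso.
have ram : ramified_at a b p by apply/hram.
apply: (odd_contra pp ram (gross_q0 x) (gross_q0 y)) => K.
have [x' [y' hq]] := stepA pp op nD.
set q := n * x' ^+ 2 + 2 * s * x' * y' + m * y' ^+ 2 in hq.
have hc : (p%:Z %| - q - 1)%Z by rewrite -opprD rpredN.
have [X [hX1 hX2]] := hensel pp op hc K.
have [r er] := dvdzP hX2.
exists X, x', y', (r * p%:Z); split.
  apply/negP => hX.
  have : (p%:Z %| X - (X - 1))%Z by rewrite rpredB.
  rewrite opprB addrC subrK dvdz1 /= => /eqP e.
  by move: (prime_gt1 pp); rewrite e.
rewrite pure_norm ?gross_q0 //.
have -> : qtrace (qmul a b (gross x) (qconj (gross y))) = (2 * s)%:~R.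
  by rewrite intrM -es; field.
rewrite en em.
have -> : (p ^ K)%N%:Z * (r * p%:Z) = X ^+ 2 - (- q).
  by rewrite er expnS PoszM; ring.
rewrite /q !(intrD, intrN, intrM, rmorphXn) /=; ring.
Qed.

Unset Implicit Arguments.

Theorem corollary3p14 (p : nat) (a b : int) (O : quat -> Prop)
    (beta1 beta2 : quat) :
  prime p -> is_Bp_model p a b -> is_order a b O ->
  gross_lattice O beta1 -> gross_lattice O beta2 ->
  qlin_indep2 beta1 beta2 ->
  qnorm a b beta1 <= p%:R ->
  (forall n : int,
      qnorm a b beta2 <= qnorm a b (qadd beta2 (qscale n%:~R beta1))) ->
  exists t : nat,
    `| qtrace (qmul a b beta1 (qconj beta2)) / 2 | = t%:R /\
    sq_cong_mod p t (qnorm a b beta1 * qnorm a b beta2) /\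
    (forall s : nat,
        sq_cong_mod p s (qnorm a b beta1 * qnorm a b beta2) -> (t <= s)%N).
Proof.
move=> pp hB hO [x [Ox ->]] [y [Oy ->]] _ hn1 hmin.
rewrite -/(gross x) -/(gross y) in hn1 hmin *.
have [n [m [s [en [em [es hD]]]]]] := D_div pp hB hO Ox Oy.
have eT : qtrace (qmul a b (gross x) (qconj (gross y))) = (2 * s)%:~R.
  by rewrite intrM -es; field.
have b1 : (0 <= 2 * s + n)%R.
  have := hmin 1; rewrite shift_norm en em eT => h.
  rewrite -(ler0z rat) intrD intrM. move: h. rewrite !intrM /=. lra.
have b2 : (0 <= n - 2 * s)%R.
  have := hmin (-1); rewrite shift_norm en em eT => h.
  rewrite -(ler0z rat) intrD intrN intrM. move: h. rewrite !(intrM, intrN) /=. lra.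
have b3 : (n <= p%:Z)%R by rewrite -(ler_int rat); move: hn1; rewrite en.
have bs : (2 * `|s| <= p)%N by lia.
have [w ew] := dvdzP hD.
have st : ((`|s| ^ 2)%N : int) = s ^+ 2 by rewrite -abszX gez0_abs // sqr_ge0.
exists `|s|%N; split; [|split].
- rewrite es -intr_norm -abszE. by [].
- exists (- w). rewrite en em.
  have -> : ((`|s| ^ 2)%N%:R : rat) = ((`|s| ^ 2)%N%:Z)%:~R by [].
  rewrite st -!intrM -intrB. rewrite (_ : (p%:R : rat) = (p%:Z)%:~R) // -intrM.
  congr (_%:~R). apply/eqP; rewrite -subr_eq0; apply/eqP.
  have : n * m - s ^+ 2 - w * p%:Z = 0 by rewrite ew subrr.
  move=> h; transitivity (- (n * m - s ^+ 2 - w * p%:Z)); first ring. by rewrite h oppr0.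
- move=> s' [k ek]. rewrite en em in ek.
  have ek' : ((s' ^ 2)%N%:Z - n * m = p%:Z * k)%R.
    apply: (@intr_inj rat). rewrite intrB !intrM. by [].
  have hp : (p%:Z %| (s'%:Z - `|s|%N%:Z) * (s'%:Z + `|s|%N%:Z))%Z.
    apply/dvdzP; exists (k + w).
    have e3 : (s'%:Z - `|s|%N%:Z) * (s'%:Z + `|s|%N%:Z) = (s' ^ 2)%N%:Z - (`|s| ^ 2)%N%:Z.
      rewrite -!natz !natrX; ring.
    rewrite e3 st. have : s ^+ 2 = n * m - w * p%:Z by rewrite -ew; ring.
    move=> ->. rewrite -[(s' ^ 2)%N%:Z](subrK (n * m)) ek'. ring.
  rewrite dvdzE abszM Euclid_dvdM // in hp.
  case: (leqP `|s|%N s') => // lt; exfalso.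
  case/orP: hp => hp.
    have pos : (0 < `|s'%:Z - `|s|%N%:Z|)%N by lia.
    have := dvdn_leq pos hp. lia.
  have pos : (0 < `|(s'%:Z + (`|s|%N)%:Z)%R|)%N by lia.
  have := dvdn_leq pos hp. lia.
Qed.
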